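(* Let $\theta=\sqrt{b/a}$ with $a<b$ coprime positive integers not both perfect squares. For all $C,D>0$ there exist $\varepsilon>\eta>C$ with $\varepsilon-\eta<D$ such that $$0=\liminf_{B\to\infty}\delta_{\theta,B,1/2}(\chi_{\varepsilon,\eta})<\limsup_{B\to\infty}\delta_{\theta,B,1/2}(\chi_{\varepsilon,\eta})=O_{\varepsilon,\eta}(1).$$ In particular, the measures $\delta_{\theta,B,1/2}$ have no limit measure as $B\to\infty$.
   Context: On $\mathbb{P}^1(\mathbb{Q})$ use the height $H([u:v])=\max(|u|,|v|)$ with $u,v$ coprime integers. For a real number $\theta$, $r>0$, $B>0$ and $f$ a compactly supported function on $\mathbb{R}$, set $\delta_{\theta,B,r}(f)=\sum_{[u:v]\in\mathbb{P}^1(\mathbb{Q}),\,v\ne0,\,H([u:v])\le B}f\big(B^{1/r}(u/v-\theta)\big)$. For $\varepsilon>\eta\ge0$, $\chi_{\varepsilon,\eta}$ is the indicator function of $\{t\in\mathbb{R}:\eta<|t|\le\varepsilon\}$ and $\chi_\varepsilon=\chi_{\varepsilon,0}$ is that of $\{|t|\le\varepsilon\}$. *)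

(* Defs.v *)
From Stdlib Require Import Reals Lra Lia ZArith List.
Open Scope R_scope.

Definition chi (eps eta : R) (t : R) : R :=
  if Rlt_dec eta (Rabs t) then (if Rle_dec (Rabs t) eps then 1 else 0) else 0.

Definition Zsym (N : nat) : list Z :=
  map (fun k => (Z.of_nat k - Z.of_nat N)%Z) (seq 0 (2 * N + 1)).
Definition Zpos_upto (N : nat) : list Z :=
  map (fun k => Z.of_nat k) (seq 1 N).

(* delta_{theta,B,r}(f) = sum over [u:v] in P^1(Q), v <> 0, H([u:v]) <= B of
   f(B^(1/r) (u/v - theta)).  Each such point has a unique representative
   (u,v) with u,v coprime integers and v > 0; H = max(|u|,|v|). *)
Definition delta (theta B r : R) (f : R -> R) : R :=
  let N := Z.to_nat (up B) in
  fold_right Rplus 0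
    (map (fun p : Z * Z =>
            let (u, v) := p in
            if (Z.eqb (Z.gcd u v) 1)%Z then
              (if Rle_dec (Rmax (Rabs (IZR u)) (Rabs (IZR v))) B then
                 f (Rpower B (1 / r) * (IZR u / IZR v - theta))
               else 0)
            else 0)
         (list_prod (Zsym N) (Zpos_upto N))).

Definition liminf_infty_eq (g : R -> R) (l : R) : Prop :=
  (forall e, 0 < e -> forall M, exists B, M <= B /\ g B < l + e) /\
  (forall e, 0 < e -> exists M, forall B, M <= B -> l - e < g B).

Definition limsup_infty_eq (g : R -> R) (l : R) : Prop :=
  (forall e, 0 < e -> forall M, exists B, M <= B /\ l - e < g B) /\
  (forall e, 0 < e -> exists M, forall B, M <= B -> g B < l + e).

(* Main.v *)
Require Import Defs.
From Stdlib Require Import Reals ZArith.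
From Stdlib Require Import Lra Lia List Znumtheory Classical ClassicalEpsilon.
Open Scope R_scope.

Lemma pigeon {A : Type} (l : list A) (F : A -> Z) (K : nat) :
  NoDup l -> (forall x y, In x l -> In y l -> F x = F y -> x = y) ->
  (forall x, In x l -> (0 <= F x < Z.of_nat K)%Z) -> (length l <= K)%nat.
Proof.
  intros Hn Hi Hr.
  assert (H1 : NoDup (map F l)) by (apply NoDup_map_NoDup_ForallPairs; auto).
  assert (H2 : incl (map F l) (map Z.of_nat (seq 0 K))).
  { intros z Hz. apply in_map_iff in Hz. destruct Hz as [x [<- Hx]].
    apply in_map_iff. exists (Z.to_nat (F x)). specialize (Hr x Hx).
    split. apply Z2Nat.id; lia. apply in_seq. lia. }
  pose proof (NoDup_incl_length H1 H2). rewrite !length_map, length_seq in H. exact H.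
Qed.

Lemma sum01 {A : Type} (t : A -> R) (l : list A) :
  (forall x, t x = 0 \/ t x = 1) ->
  fold_right Rplus 0 (map t l) =
  INR (length (filter (fun x => if Req_EM_T (t x) 0 then false else true) l)).
Proof.
  intros H. induction l as [|x l IH]; simpl. reflexivity.
  rewrite IH. destruct (Req_EM_T (t x) 0) as [e|e].
  rewrite e; ring. destruct (H x); [contradiction|]. rewrite H0. simpl length.
  rewrite S_INR. ring.
Qed.

Lemma NoDup_prod {A B : Type} (l : list A) (l' : list B) :
  NoDup l -> NoDup l' -> NoDup (list_prod l l').
Proof.
  intros H H'. induction H as [|x l Hx Hl IH]; simpl. constructor.
  apply NoDup_app; auto.
  - apply NoDup_map_NoDup_ForallPairs; auto. intros a b _ _ E. congruence.
  - intros [u v] Hin Hin2. apply in_map_iff in Hin. destruct Hin as [y [E _]].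
    injection E; intros; subst. apply in_prod_iff in Hin2. tauto.
Qed.

Lemma last_level (P : nat -> Prop) (K : nat) :
  P 1%nat -> ~ P (S K) -> exists n, (1 <= n)%nat /\ P n /\ ~ P (S n).
Proof.
  intros H1. induction K as [|K IH]; intros HK. contradiction.
  destruct (classic (P (S K))) as [h|h]. exists (S K). split. lia. auto.
  apply IH; auto.
Qed.

Lemma coprime_eq (u v u' v' : Z) : Z.gcd u v = 1%Z -> Z.gcd u' v' = 1%Z ->
  (0 < v)%Z -> (0 < v')%Z -> (u * v' = u' * v)%Z -> u = u' /\ v = v'.
Proof.
  intros g g' hv hv' E.
  assert (d1 : (v | v')%Z).
  { apply Z.gauss with u. exists u'. lia. rewrite Z.gcd_comm; auto. }
  assert (d2 : (v' | v)%Z).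
  { apply Z.gauss with u'. exists u. lia. rewrite Z.gcd_comm; auto. }
  assert (v = v') by (apply Z.divide_antisym_nonneg; auto; lia). subst v'.
  split; auto. apply Z.mul_reg_r with v; lia.
Qed.

Lemma frac_sep (u v u' v' : Z) : (0 < v)%Z -> (0 < v')%Z ->
  Rabs (IZR u / IZR v - IZR u' / IZR v') < 1 / (IZR v * IZR v') ->
  IZR u / IZR v = IZR u' / IZR v'.
Proof.
  intros hv hv' H.
  assert (Hv : 0 < IZR v) by (apply IZR_lt; auto).
  assert (Hv' : 0 < IZR v') by (apply IZR_lt; auto).
  assert (E : IZR u / IZR v - IZR u' / IZR v' = IZR (u * v' - u' * v) / (IZR v * IZR v')).
  { rewrite minus_IZR, !mult_IZR. field. lra. }
  rewrite E in H. destruct (Z.eq_dec (u * v' - u' * v) 0) as [z|z].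
  - apply Rminus_diag_uniq. rewrite E, z. unfold Rdiv; ring.
  - exfalso. assert (1 <= Rabs (IZR (u * v' - u' * v))).
    { rewrite <- abs_IZR. apply IZR_le. lia. }
    unfold Rdiv in H. rewrite Rabs_mult, (Rabs_right (/ _)) in H.
    2: { apply Rle_ge, Rlt_le, Rinv_0_lt_compat, Rmult_lt_0_compat; auto. }
    assert (0 < / (IZR v * IZR v')) by (apply Rinv_0_lt_compat, Rmult_lt_0_compat; auto).
    nra.
Qed.

Definition term (th eps eta B : R) (p : Z * Z) : R :=
  let (u, v) := p in
  if Z.eqb (Z.gcd u v) 1 then
    (if Rle_dec (Rmax (Rabs (IZR u)) (Rabs (IZR v))) B then
       chi eps eta (Rpower B (1 / (1 / 2)) * (IZR u / IZR v - th)) else 0) else 0.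

Definition LB (B : R) := list_prod (Zsym (Z.to_nat (up B))) (Zpos_upto (Z.to_nat (up B))).

Lemma delta_eq th eps eta B :
  delta th B (1/2) (chi eps eta) = fold_right Rplus 0 (map (term th eps eta B) (LB B)).
Proof. reflexivity. Qed.

Lemma term01 th eps eta B p : term th eps eta B p = 0 \/ term th eps eta B p = 1.
Proof.
  destruct p as [u v]; unfold term, chi.
  destruct (Z.gcd u v =? 1)%Z; [|auto].
  destruct Rle_dec; [|auto]. destruct Rlt_dec; [|auto]. destruct Rle_dec; auto.
Qed.

Lemma Rpower2 B : 0 < B -> Rpower B (1 / (1/2)) = B * B.
Proof.
  intros h. replace (1 / (1/2)) with (INR 2) by (simpl; field).
  rewrite Rpower_pow; auto. simpl; ring.
Qed.

Lemma in_LB B u v : 0 < B -> (In (u, v) (LB B) <-> (1 <= v)%Z /\ (IZR v <= IZR (up B)) /\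
   (- IZR (up B) <= IZR u <= IZR (up B))).
Proof.
  intros hB. unfold LB, Zsym, Zpos_upto. rewrite in_prod_iff, !in_map_iff.
  assert (hu : (0 <= up B)%Z).
  { apply le_IZR. destruct (archimed B). lra. }
  pose proof (Z2Nat.id _ hu) as E.
  split.
  - intros [[k [Ek Hk]] [k' [Ek' Hk']]]. apply in_seq in Hk, Hk'. subst.
    repeat split.
    + lia.
    + apply IZR_le. lia.
    + rewrite <- opp_IZR. apply IZR_le. lia.
    + apply IZR_le. lia.
  - intros [h1 [h2 [h3 h4]]]. apply le_IZR in h2, h4. rewrite <- opp_IZR in h3. apply le_IZR in h3.
    split.
    + exists (Z.to_nat (u + Z.of_nat (Z.to_nat (up B)))). split. lia. apply in_seq. lia.
    + exists (Z.to_nat v). split. lia. apply in_seq. lia.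
Qed.

Lemma term_spec th eps eta B u v : 0 < B -> In (u, v) (LB B) ->
  term th eps eta B (u, v) <> 0 ->
  Z.gcd u v = 1%Z /\ (1 <= v)%Z /\ Rabs (IZR u) <= B /\ IZR v <= B /\
  eta < B * B * Rabs (IZR u / IZR v - th) <= eps.
Proof.
  intros hB Hin Ht. apply in_LB in Hin; auto. destruct Hin as [h1 _].
  unfold term, chi in Ht. destruct (Z.gcd u v =? 1)%Z eqn:G; [|lra].
  apply Z.eqb_eq in G.
  destruct Rle_dec as [r|r]; [|lra]. rewrite Rpower2 in Ht; auto.
  rewrite Rabs_mult, (Rabs_right (B * B)) in Ht by nra.
  destruct Rlt_dec; [|lra]. destruct Rle_dec; [|lra].
  assert (IZR v >= 1) by (apply Rle_ge, IZR_le; auto).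
  pose proof (Rmax_l (Rabs (IZR u)) (Rabs (IZR v))).
  pose proof (Rmax_r (Rabs (IZR u)) (Rabs (IZR v))).
  assert (Rabs (IZR v) = IZR v) by (apply Rabs_right; lra).
  repeat split; auto; lra.
Qed.

Lemma term_one th eps eta B u v : 0 < B -> Z.gcd u v = 1%Z -> (1 <= v)%Z ->
  Rabs (IZR u) <= B -> IZR v <= B ->
  eta < B * B * Rabs (IZR u / IZR v - th) <= eps ->
  In (u, v) (LB B) /\ term th eps eta B (u, v) = 1.
Proof.
  intros hB G h1 hu hv He. destruct (archimed B) as [a1 a2].
  split.
  - apply in_LB; auto. pose proof (Rle_abs (IZR u)). pose proof (Rle_abs (- IZR u)). rewrite Rabs_Ropp in H0. repeat split; auto; lra.
  - unfold term, chi. rewrite (proj2 (Z.eqb_eq _ _) G).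
    assert (IZR v >= 1) by (apply Rle_ge, IZR_le; auto).
    destruct Rle_dec as [r|r].
    2: { exfalso; apply r. apply Rmax_lub; auto. rewrite Rabs_right; lra. }
    rewrite Rpower2 by auto. rewrite Rabs_mult, (Rabs_right (B * B)) by nra.
    destruct Rlt_dec; [|lra]. destruct Rle_dec; [|lra]. reflexivity.
Qed.

Definition cnt th eps eta B :=
  length (filter (fun x => if Req_EM_T (term th eps eta B x) 0 then false else true) (LB B)).

Lemma g_eq th eps eta B : delta th B (1/2) (chi eps eta) = INR (cnt th eps eta B).
Proof. rewrite delta_eq. apply sum01. apply term01. Qed.

Lemma in_cnt th eps eta B p : In p (filter (fun x => if Req_EM_T (term th eps eta B x) 0 then false else true) (LB B)) <-> In p (LB B) /\ term th eps eta B p <> 0.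
Proof.
  rewrite filter_In. destruct (Req_EM_T (term th eps eta B p) 0); intuition congruence.
Qed.

Lemma abs_le_inv y c : Rabs y <= c -> - c <= y <= c.
Proof. intros H. pose proof (Rle_abs y). pose proof (Rle_abs (- y)). rewrite Rabs_Ropp in H1. lra. Qed.

Lemma floor_close y y' : Int_part y = Int_part y' -> Rabs (y - y') < 1.
Proof.
  intros E. destruct (base_Int_part y). destruct (base_Int_part y').
  rewrite E in *. apply Rabs_def1; lra.
Qed.

Lemma floor_range y K : 0 <= y <= K -> (0 <= Int_part y < up K)%Z.
Proof.
  intros H. destruct (base_Int_part y). destruct (archimed K). split.
  - assert (-1 < Int_part y)%Z by (apply lt_IZR; lra). lia.
  - apply lt_IZR. lra.
Qed.

Lemma frac_pairs u v u' v' : Z.gcd u v = 1%Z -> Z.gcd u' v' = 1%Z -> (1 <= v)%Z -> (1 <= v')%Z ->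
  IZR u / IZR v = IZR u' / IZR v' -> (u, v) = (u', v').
Proof.
  intros g g' h h' E.
  assert (Hv : 0 < IZR v) by (apply IZR_lt; lia).
  assert (Hv' : 0 < IZR v') by (apply IZR_lt; lia).
  assert (IZR (u * v') = IZR (u' * v)).
  { rewrite !mult_IZR. apply (Rmult_eq_reg_r (/ (IZR v * IZR v'))).
    2: { apply Rgt_not_eq, Rlt_gt, Rinv_0_lt_compat, Rmult_lt_0_compat; auto. }
    replace (IZR u * IZR v' * / (IZR v * IZR v')) with (IZR u / IZR v) by (field; lra).
    rewrite E. field; lra. }
  apply eq_IZR in H. destruct (coprime_eq u v u' v' g g'); try lia. subst; auto.
Qed.

Lemma cnt_bound th eps eta B : 0 < B -> 0 < eta ->
  (cnt th eps eta B <= Z.to_nat (up (2 * eps)))%nat.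
Proof.
  intros hB he. unfold cnt.
  set (F := fun p : Z * Z => let (u, v) := p in
        Int_part ((IZR u / IZR v - th) * (B * B) + eps)).
  apply (pigeon _ F).
  - apply NoDup_filter. apply NoDup_prod.
    + unfold Zsym. apply NoDup_map_NoDup_ForallPairs. intros x y _ _ E; lia. apply seq_NoDup.
    + unfold Zpos_upto. apply NoDup_map_NoDup_ForallPairs. intros x y _ _ E; lia. apply seq_NoDup.
  - intros [u v] [u' v'] H1 H2 E. apply in_cnt in H1, H2.
    destruct H1 as [H1 T1]. destruct H2 as [H2 T2].
    destruct (term_spec _ _ _ _ _ _ hB H1 T1) as [g [hv [hu [hvB [e1 e2]]]]].
    destruct (term_spec _ _ _ _ _ _ hB H2 T2) as [g' [hv' [hu' [hvB' [e1' e2']]]]].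
    simpl in E. apply floor_close in E. apply frac_pairs; auto.
    apply frac_sep; try lia.
    assert (Hv : 1 <= IZR v) by (apply IZR_le; lia).
    assert (Hv' : 1 <= IZR v') by (apply IZR_le; lia).
    replace ((IZR u / IZR v - th) * (B * B) + eps - ((IZR u' / IZR v' - th) * (B * B) + eps))
      with ((IZR u / IZR v - IZR u' / IZR v') * (B * B)) in E by ring.
    rewrite Rabs_mult, (Rabs_right (B*B)) in E by nra.
    apply (Rmult_lt_reg_r (B * B)). nra.
    apply Rlt_le_trans with 1; auto.
    apply (Rmult_le_reg_l (IZR v * IZR v')). nra.
    field_simplify; try lra. rewrite Rmult_comm. apply Rmult_le_compat; lra.
  - intros [u v] H. apply in_cnt in H. destruct H as [H T].
    destruct (term_spec _ _ _ _ _ _ hB H T) as [g [hv [hu [hvB [e1 e2]]]]].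
    rewrite Z2Nat.id.
    2: { apply le_IZR. destruct (archimed (2 * eps)). nra. }
    simpl. apply floor_range.
    set (x := IZR u / IZR v - th) in *.
    assert (Rabs x * (B * B) <= eps) by lra.
    rewrite <- (Rabs_right (B*B)) in H0 by nra. rewrite <- Rabs_mult in H0.
    apply abs_le_inv in H0. lra.
Qed.

Lemma cnt_nz th eps eta B : cnt th eps eta B <> 0%nat ->
  exists p, In p (LB B) /\ term th eps eta B p <> 0.
Proof.
  unfold cnt. destruct (filter _ (LB B)) as [|p l] eqn:E. simpl; lia.
  intros _. exists p. apply in_cnt. rewrite E. left; auto.
Qed.

Lemma ratio_contra B B' d eta eps m : 0 < B -> 0 < d -> 0 < m ->
  B * (1 + 1 / (2 * m)) <= B' -> eta < B * B * d -> B' * B' * d <= eps ->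
  eps <= eta * (1 + 1 / m) -> 0 < eta -> False.
Proof.
  intros hB hd hm H1 H2 H3 H4 he.
  assert (B * B * (1 + 1/m) <= B' * B').
  { assert (B*B*(1+1/m) <= (B * (1 + 1/(2*m))) * (B * (1 + 1/(2*m)))).
    { replace ((B * (1 + 1/(2*m))) * (B * (1 + 1/(2*m)))) with
        (B*B*(1+1/m) + B*B*(1/(2*m))*(1/(2*m))) by (field; lra).
      assert (0 <= B*B*(1/(2*m))*(1/(2*m))).
      { apply Rmult_le_pos. apply Rmult_le_pos. nra. left; apply Rdiv_lt_0_compat; lra.
        left; apply Rdiv_lt_0_compat; lra. }
      lra. }
    assert (0 <= B * (1 + 1/(2*m))).
    { apply Rmult_le_pos. lra. assert (0 < 1/(2*m)) by (apply Rdiv_lt_0_compat; lra). lra. }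
    nra. }
  assert (0 < 1/m) by (apply Rdiv_lt_0_compat; lra).
  assert (B*B*d*(1+1/m) <= B'*B'*d) by nra.
  assert (eta * (1+1/m) < B*B*d*(1+1/m)) by nra.
  lra.
Qed.

Lemma ratio_step m j j' : 1 <= m -> 0 <= j <= m -> j + 1 <= j' ->
  (1 + 1/(2*m))*(1 + j/m) <= 1 + j'/m.
Proof.
  intros hm hj hj'. apply (Rmult_le_reg_r (2*m*m)). nra.
  replace ((1 + 1/(2*m))*(1 + j/m) * (2*m*m)) with ((2*m+1)*(m+j)) by (field; lra).
  replace ((1 + j'/m) * (2*m*m)) with (2*m*(m+j')) by (field; lra). nra.
Qed.

Lemma zero_exists th eps eta T : 1 <= eta -> eta < eps ->
  eps <= eta * (1 + 1 / INR (Z.to_nat (up (8 * eps)))) -> 0 < T ->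
  exists B, T <= B /\ cnt th eps eta B = 0%nat.
Proof.
  intros he hee hd hT.
  set (M := Z.to_nat (up (8 * eps))) in *.
  assert (hM8 : (0 < up (8 * eps))%Z).
  { apply lt_IZR. destruct (archimed (8 * eps)). lra. }
  assert (EM : IZR (up (8 * eps)) = INR M).
  { unfold M. rewrite INR_IZR_INZ, Z2Nat.id; auto. lia. }
  assert (hM : 1 <= INR M).
  { destruct (archimed (8 * eps)). rewrite <- EM. lra. }
  apply NNPP. intro Hn.
  assert (Hall : forall B, T <= B -> cnt th eps eta B <> 0%nat).
  { intros B hB E. apply Hn. exists B. auto. }
  set (Bj := fun j : nat => T * (1 + INR j / INR M)).
  set (pick := fun j : nat => epsilon (inhabits (0%Z, 0%Z))
           (fun p => In p (LB (Bj j)) /\ term th eps eta (Bj j) p <> 0)).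
  assert (Hpick : forall j, (j <= M)%nat -> In (pick j) (LB (Bj j)) /\ term th eps eta (Bj j) (pick j) <> 0).
  { intros j hj. unfold pick. apply epsilon_spec. apply cnt_nz. apply Hall.
    unfold Bj. assert (0 <= INR j / INR M). apply Rmult_le_pos. apply pos_INR.
    left; apply Rinv_0_lt_compat; lra. nra. }
  assert (HB : forall j, (j <= M)%nat -> T <= Bj j <= 2 * T).
  { intros j hj. unfold Bj. assert (0 <= INR j / INR M). apply Rmult_le_pos. apply pos_INR.
    left; apply Rinv_0_lt_compat; lra.
    assert (INR j / INR M <= 1). { apply (Rmult_le_reg_r (INR M)); [lra|].
      unfold Rdiv; rewrite Rmult_assoc, Rinv_l by lra. rewrite Rmult_1_r, Rmult_1_l. apply le_INR; auto. }
    nra. }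
  set (F := fun j : nat => let (u, v) := pick j in
        Int_part ((IZR u / IZR v - th) * (4 * (T * T)) + 4 * eps)).
  assert (Hlen : (length (seq 0 (S M)) <= M)%nat).
  { apply (pigeon _ F).
    - apply seq_NoDup.
    - intros j j' Hj Hj' E. apply in_seq in Hj, Hj'.
      assert (hj : (j <= M)%nat) by lia. assert (hj' : (j' <= M)%nat) by lia.
      destruct (Hpick j hj) as [I1 T1]. destruct (Hpick j' hj') as [I2 T2].
      destruct (HB j hj) as [b1 b2]. destruct (HB j' hj') as [b1' b2'].
      unfold F in E. destruct (pick j) as [u v]. destruct (pick j') as [u' v'].
      destruct (term_spec _ _ _ _ _ _ (Rlt_le_trans _ _ _ hT b1) I1 T1) as [g [hv [hu [hvB [e1 e2]]]]].
      destruct (term_spec _ _ _ _ _ _ (Rlt_le_trans _ _ _ hT b1') I2 T2) as [g' [hv' [hu' [hvB' [e1' e2']]]]].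
      apply floor_close in E.
      assert (Ex : IZR u / IZR v = IZR u' / IZR v').
      { apply frac_sep; try lia.
        assert (Hv : 1 <= IZR v) by (apply IZR_le; lia).
        assert (Hv' : 1 <= IZR v') by (apply IZR_le; lia).
        replace ((IZR u / IZR v - th) * (4 * (T * T)) + 4 * eps - ((IZR u' / IZR v' - th) * (4 * (T * T)) + 4 * eps))
          with ((IZR u / IZR v - IZR u' / IZR v') * (4 * (T * T))) in E by ring.
        rewrite Rabs_mult, (Rabs_right (4 * (T*T))) in E by nra.
        apply (Rmult_lt_reg_r (4 * (T * T))). nra.
        apply Rlt_le_trans with 1; auto.
        apply (Rmult_le_reg_l (IZR v * IZR v')). nra.
        field_simplify; try lra.
        assert (IZR v * IZR v' <= (2*T) * (2*T)) by (apply Rmult_le_compat; lra).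
        lra. }
      rewrite <- Ex in e1', e2'.
      set (d := Rabs (IZR u / IZR v - th)) in *.
      assert (hd0 : 0 < d).
      { destruct (Rle_lt_dec d 0); auto. exfalso. assert (0 <= Bj j * Bj j) by nra. nra. }
      destruct (Nat.lt_total j j') as [lt|[eq|lt]]; auto; exfalso.
      + apply (ratio_contra (Bj j) (Bj j') d eta eps (INR M)); try lra.
        unfold Bj. apply lt_INR in lt. apply le_INR in hj.
        rewrite Rmult_assoc. apply Rmult_le_compat_l. lra.
        assert (INR j + 1 <= INR j'). { rewrite <- S_INR. apply le_INR. apply INR_lt in lt. lia. }
        rewrite Rmult_comm. apply ratio_step; auto. split; auto. apply pos_INR.
      + apply (ratio_contra (Bj j') (Bj j) d eta eps (INR M)); try lra.
        unfold Bj. apply lt_INR in lt. apply le_INR in hj'.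
        rewrite Rmult_assoc. apply Rmult_le_compat_l. lra.
        assert (INR j' + 1 <= INR j). { rewrite <- S_INR. apply le_INR. apply INR_lt in lt. lia. }
        rewrite Rmult_comm. apply ratio_step; auto. split; auto. apply pos_INR.
    - intros j Hj. apply in_seq in Hj. assert (hj : (j <= M)%nat) by lia.
      destruct (Hpick j hj) as [I1 T1]. destruct (HB j hj) as [b1 b2].
      unfold F. destruct (pick j) as [u v].
      destruct (term_spec _ _ _ _ _ _ (Rlt_le_trans _ _ _ hT b1) I1 T1) as [g [hv [hu [hvB [e1 e2]]]]].
      unfold M. rewrite Z2Nat.id by lia. apply floor_range.
      set (x := IZR u / IZR v - th) in *.
      assert (Rabs x * (T * T) <= eps).
      { assert (T * T <= Bj j * Bj j) by nra.
        assert (0 <= Rabs x) by apply Rabs_pos. nra. }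
      assert (Rabs (x * (T*T)) <= eps) by (rewrite Rabs_mult, (Rabs_right (T*T)) by nra; lra).
      apply abs_le_inv in H0. lra. }
  rewrite length_seq in Hlen. lia.
Qed.

Lemma gcd_sq u v : Z.gcd u v = 1%Z -> Z.gcd (u*u) (v*v) = 1%Z.
Proof.
  intros g. apply Zgcd_1_rel_prime in g. apply Zgcd_1_rel_prime.
  apply rel_prime_mult; apply rel_prime_sym; apply rel_prime_mult; apply rel_prime_sym; auto.
Qed.

Lemma irrational (a b : Z) (ha : (0 < a)%Z) (hab : (a < b)%Z)
  (hcop : Z.gcd a b = 1%Z)
  (hsq : ~ ((exists x : Z, a = (x * x)%Z) /\ (exists y : Z, b = (y * y)%Z))) :
  forall u v, Z.gcd u v = 1%Z -> (1 <= v)%Z -> IZR u / IZR v <> sqrt (IZR b / IZR a).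
Proof.
  intros u v g hv E.
  assert (Ha : 0 < IZR a) by (apply IZR_lt; auto).
  assert (Hb : 0 < IZR b) by (apply IZR_lt; lia).
  assert (Hv : 0 < IZR v) by (apply IZR_lt; lia).
  assert (E2 : (IZR u / IZR v) * (IZR u / IZR v) = IZR b / IZR a).
  { rewrite E. apply sqrt_sqrt. left; apply Rdiv_lt_0_compat; auto. }
  assert (E3 : IZR (a * (u*u)) = IZR (b * (v*v))).
  { rewrite !mult_IZR. apply (Rmult_eq_reg_r (/ (IZR a * (IZR v * IZR v)))).
    2: { apply Rgt_not_eq, Rlt_gt, Rinv_0_lt_compat. apply Rmult_lt_0_compat; nra. }
    replace (IZR a * (IZR u * IZR u) * / (IZR a * (IZR v * IZR v))) with
      ((IZR u / IZR v) * (IZR u / IZR v)) by (field; lra).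
    rewrite E2. field; lra. }
  apply eq_IZR in E3. apply hsq. pose proof (gcd_sq _ _ g) as G2.
  split.
  - exists v. apply Z.divide_antisym_nonneg; [lia|nia| |].
    + apply Z.gauss with b. exists (u*u)%Z. lia. auto.
    + apply Z.gauss with (u*u)%Z. exists b. lia. rewrite Z.gcd_comm. auto.
  - exists u. apply Z.divide_antisym_nonneg; [lia|nia| |].
    + apply Z.gauss with a. exists (v*v)%Z. lia. rewrite Z.gcd_comm; auto.
    + apply Z.gauss with (v*v)%Z. exists a. lia. auto.
Qed.

Definition frac (y : R) := y - IZR (Int_part y).

Lemma frac_range y : 0 <= frac y < 1.
Proof. unfold frac. destruct (base_Int_part y). lra. Qed.

Lemma dir_step th n k k' : (1 <= n)%nat -> (k < k' <= n)%nat ->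
  Int_part (INR n * frac (INR k * th)) = Int_part (INR n * frac (INR k' * th)) ->
  exists p q, (1 <= q)%Z /\ (q <= Z.of_nat n)%Z /\ Rabs (IZR q * th - IZR p) < 1 / INR n.
Proof.
  intros hn hk E. apply floor_close in E.
  exists (Int_part (INR k' * th) - Int_part (INR k * th))%Z, (Z.of_nat k' - Z.of_nat k)%Z.
  split. lia. split. lia.
  assert (Hn : 1 <= INR n) by (apply (le_INR 1); auto).
  rewrite !minus_IZR, <- !INR_IZR_INZ.
  replace ((INR k' - INR k) * th - (IZR (Int_part (INR k' * th)) - IZR (Int_part (INR k * th))))
    with (- (frac (INR k * th) - frac (INR k' * th))) by (unfold frac; ring).
  rewrite Rabs_Ropp. apply (Rmult_lt_reg_l (INR n)). lra.
  replace (INR n * (1 / INR n)) with 1 by (field; lra).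
  rewrite <- (Rabs_right (INR n)) at 1 by lra. rewrite <- Rabs_mult.
  replace (INR n * (frac (INR k * th) - frac (INR k' * th))) with
    (INR n * frac (INR k * th) - INR n * frac (INR k' * th)) by ring. auto.
Qed.

Lemma dirichlet0 th n : (1 <= n)%nat ->
  exists p q, (1 <= q)%Z /\ (q <= Z.of_nat n)%Z /\ Rabs (IZR q * th - IZR p) < 1 / INR n.
Proof.
  intros hn.
  set (F := fun k : nat => Int_part (INR n * frac (INR k * th))).
  assert (Hex : exists k k', In k (seq 0 (S n)) /\ In k' (seq 0 (S n)) /\ F k = F k' /\ k <> k').
  { apply NNPP. intros Hne.
    assert (length (seq 0 (S n)) <= n)%nat.
    { apply (pigeon _ F). apply seq_NoDup.
      - intros x y hx hy e. destruct (Nat.eq_dec x y); auto. exfalso. apply Hne.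
        exists x, y. auto.
      - intros x _. unfold F. destruct (frac_range (INR x * th)).
        assert (Hn : 1 <= INR n) by (apply (le_INR 1); auto).
        pose proof (floor_range (INR n * frac (INR x * th)) (INR n)).
        assert (up (INR n) = Z.of_nat n + 1)%Z.
        { symmetry. apply up_tech. rewrite <- INR_IZR_INZ; lra.
          rewrite plus_IZR, <- INR_IZR_INZ; lra. }
        rewrite H2 in H1. assert (0 <= INR n * frac (INR x * th) <= INR n) by nra.
        specialize (H1 H3).
        assert (IZR (Int_part (INR n * frac (INR x * th))) < INR n).
        { destruct (base_Int_part (INR n * frac (INR x * th))). nra. }
        assert (IZR (Int_part (INR n * frac (INR x * th))) < IZR (Z.of_nat n)) by (rewrite <- INR_IZR_INZ; auto). apply lt_IZR in H5. lia. }
    rewrite length_seq in H. lia. }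
  destruct Hex as [k [k' [hk [hk' [E ne]]]]]. apply in_seq in hk, hk'.
  destruct (Nat.lt_total k k') as [lt|[eq|lt]].
  - apply (dir_step th n k k'); auto. lia.
  - contradiction.
  - apply (dir_step th n k' k); auto. lia.
Qed.

Lemma dirichlet th n : (1 <= n)%nat ->
  (forall u v, Z.gcd u v = 1%Z -> (1 <= v)%Z -> IZR u / IZR v <> th) ->
  exists u v, Z.gcd u v = 1%Z /\ (1 <= v)%Z /\ 0 < Rabs (IZR u / IZR v - th) /\
    Rabs (IZR u / IZR v - th) < 1 / INR n /\
    Rabs (IZR u / IZR v - th) * (IZR v * IZR v) < 1.
Proof.
  intros hn Hirr. destruct (dirichlet0 th n hn) as [p [q [hq [hqn H]]]].
  set (g := Z.gcd p q).
  assert (hg : (0 < g)%Z).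
  { pose proof (Z.gcd_nonneg p q). assert (g <> 0%Z). { intro z. apply Z.gcd_eq_0_r in z. lia. } fold g in H0. lia. }
  destruct (Z.gcd_divide_l p q) as [p0 Hp]. destruct (Z.gcd_divide_r p q) as [q0 Hqq].
  fold g in Hp, Hqq.
  assert (G : Z.gcd p0 q0 = 1%Z).
  { pose proof (Z.gcd_div_gcd p q g ltac:(lia) eq_refl).
    rewrite Hp, Hqq, !Z.div_mul in H0 by lia. auto. }
  assert (hq0 : (1 <= q0)%Z) by nia.
  assert (hq0q : (q0 <= q)%Z) by nia.
  exists p0, q0. split; auto. split; auto.
  assert (Hn : 1 <= INR n) by (apply (le_INR 1); auto).
  assert (Hq : 1 <= IZR q) by (apply IZR_le; auto).
  assert (Hq0 : 1 <= IZR q0) by (apply IZR_le; auto).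
  assert (Hq0q : IZR q0 <= IZR q) by (apply IZR_le; auto).
  assert (Hqn : IZR q <= INR n) by (rewrite INR_IZR_INZ; apply IZR_le; auto).
  assert (Ex : IZR p0 / IZR q0 = IZR p / IZR q).
  { rewrite Hp, Hqq, !mult_IZR. field. split; try lra. apply not_0_IZR. lia. }
  assert (Ed : Rabs (IZR p0 / IZR q0 - th) = Rabs (IZR q * th - IZR p) / IZR q).
  { rewrite Ex. replace (IZR p / IZR q - th) with (- (IZR q * th - IZR p) / IZR q) by (field; lra).
    unfold Rdiv. rewrite Rabs_mult, Rabs_Ropp, (Rabs_right (/ IZR q)). auto.
    left; apply Rinv_0_lt_compat; lra. }
  assert (Hd : Rabs (IZR q * th - IZR p) / IZR q < 1 / (INR n * IZR q)).
  { replace (1/(INR n * IZR q)) with ((1/INR n) / IZR q) by (field; lra).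
    apply Rmult_lt_compat_r. apply Rinv_0_lt_compat; lra. auto. }
  rewrite Ed. split.
  - assert (IZR p0 / IZR q0 - th <> 0) by (intro z; apply (Hirr p0 q0); auto; lra).
    assert (0 < Rabs (IZR p0 / IZR q0 - th)) by (apply Rabs_pos_lt; auto).
    rewrite Ed in H1. auto.
  - split.
    + apply Rlt_le_trans with (1 / (INR n * IZR q)); auto.
      apply Rmult_le_compat_l. lra. apply Rinv_le_contravar. lra. nra.
    + assert (0 <= Rabs (IZR q * th - IZR p) / IZR q).
      { apply Rmult_le_pos. apply Rabs_pos. left; apply Rinv_0_lt_compat; lra. }
      apply Rle_lt_trans with (Rabs (IZR q * th - IZR p) / IZR q * (IZR q * IZR q)).
      apply Rmult_le_compat_l; auto. nra.
      apply Rlt_le_trans with (1 / (INR n * IZR q) * (IZR q * IZR q)). apply Rmult_lt_compat_r; nra; auto.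
      replace (1 / (INR n * IZR q) * (IZR q * IZR q)) with (IZR q / INR n) by (field; lra).
      apply (Rmult_le_reg_r (INR n)). lra. field_simplify; lra.
Qed.

Lemma abs_sq_le x B : 0 <= B -> x * x <= B * B -> Rabs x <= B.
Proof.
  intros hB H. destruct (Rle_lt_dec (Rabs x) B); auto. exfalso.
  assert (Rabs x * Rabs x = x * x) by (rewrite <- Rabs_mult; apply Rabs_right; nra).
  nra.
Qed.

Lemma counted_exists th eps eta M : 0 <= th -> (th + 1) * (th + 1) <= eps -> 1 <= eps ->
  0 < eta < eps ->
  (forall u v, Z.gcd u v = 1%Z -> (1 <= v)%Z -> IZR u / IZR v <> th) ->
  exists B, M <= B /\ (1 <= cnt th eps eta B)%nat.
Proof.
  intros hth he1 he2 he3 Hirr.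
  set (n := S (Z.to_nat (up (M * M / eps)))).
  destruct (dirichlet th n ltac:(unfold n; lia) Hirr) as [u [v [g [hv [d0 [d1 d2]]]]]].
  set (d := Rabs (IZR u / IZR v - th)) in *.
  assert (Hn : M * M / eps < INR n).
  { unfold n. rewrite S_INR, INR_IZR_INZ. destruct (archimed (M * M / eps)).
    destruct (Z_lt_le_dec (up (M * M / eps)) 0).
    - assert (0 <= M * M / eps). apply Rmult_le_pos. nra. left; apply Rinv_0_lt_compat; lra.
      exfalso. assert (IZR (up (M*M/eps)) <= -1) by (apply IZR_le; lia). lra.
    - rewrite Z2Nat.id; auto. lra. }
  assert (HnP : 1 <= INR n) by (unfold n; rewrite S_INR; pose proof (pos_INR (Z.to_nat (up (M * M / eps)))); lra).
  set (B := sqrt (eps / d)).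
  assert (HBB : B * B = eps / d) by (apply sqrt_sqrt; left; apply Rdiv_lt_0_compat; lra).
  assert (HB0 : 0 <= B) by apply sqrt_pos.
  assert (Hv : 1 <= IZR v) by (apply IZR_le; auto).
  assert (Hdn : d * INR n < 1).
  { apply (Rmult_lt_reg_r (/ INR n)). apply Rinv_0_lt_compat; lra.
    rewrite Rmult_assoc, Rinv_r, Rmult_1_r, Rmult_1_l by lra. unfold Rdiv in d1. lra. }
  assert (HBd : B * B * d = eps) by (rewrite HBB; field; lra).
  exists B. split.
  - destruct (Rle_lt_dec M 0). lra.
    assert (M * M <= B * B).
    { rewrite HBB. apply (Rmult_le_reg_r d). auto. replace (eps / d * d) with eps by (field; lra).
      assert (M * M < eps * INR n).
      { apply (Rmult_lt_reg_r (/ eps)). apply Rinv_0_lt_compat; lra.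
        replace (eps * INR n * / eps) with (INR n) by (field; lra). auto. }
      nra. }
    apply abs_sq_le in H; auto. rewrite Rabs_right in H; lra.
  - assert (hB : 0 < B).
    { destruct HB0; auto. rewrite <- H in HBd. lra. }
    assert (Hx : Rabs (IZR u / IZR v) < th + 1).
    { replace (IZR u / IZR v) with (th + (IZR u / IZR v - th)) by ring.
      eapply Rle_lt_trans. apply Rabs_triang. rewrite Rabs_right by lra.
      assert (d < 1). { apply Rlt_le_trans with (1 / INR n); auto.
        apply (Rmult_le_reg_r (INR n)). lra. field_simplify; lra. }
      unfold d in H. lra. }
    destruct (term_one th eps eta B u v hB g hv) as [Hin Ht].
    + apply abs_sq_le; auto. rewrite HBB.
      apply (Rmult_le_reg_r d). auto. replace (eps / d * d) with eps by (field; lra).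
      replace (IZR u * IZR u * d) with ((IZR u / IZR v) * (IZR u / IZR v) * (d * (IZR v * IZR v))) by (field; lra).
      assert ((IZR u / IZR v) * (IZR u / IZR v) < (th + 1) * (th+1)).
      { rewrite <- Rabs_mult_pos_r_eq || idtac.
        assert (Rabs (IZR u / IZR v) * Rabs (IZR u / IZR v) = (IZR u / IZR v) * (IZR u / IZR v)).
        { rewrite <- Rabs_mult. apply Rabs_right. nra. }
        pose proof (Rabs_pos (IZR u / IZR v)). nra. }
      assert (0 <= (IZR u / IZR v) * (IZR u / IZR v)) by nra.
      assert (0 <= d * (IZR v * IZR v)) by nra.
      nra.
    + assert (IZR v * IZR v <= B * B).
      { rewrite HBB. apply (Rmult_le_reg_r d). auto. replace (eps / d * d) with eps by (field; lra). nra. }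
      apply abs_sq_le in H; auto. rewrite Rabs_right in H; lra.
    + fold d. split; lra.
    + unfold cnt. destruct (filter _ (LB B)) eqn:E.
      * exfalso. assert (In (u, v) (filter (fun x => if Req_EM_T (term th eps eta B x) 0 then false else true) (LB B))).
        { apply in_cnt. split; auto. lra. }
        rewrite E in H. contradiction.
      * simpl. lia.
Qed.

Theorem mainTheorem6 (a b : Z) (ha : (0 < a)%Z) (hab : (a < b)%Z)
  (hcop : Z.gcd a b = 1%Z)
  (hsq : ~ ((exists x : Z, a = (x * x)%Z) /\ (exists y : Z, b = (y * y)%Z))) :
  forall C D : R, 0 < C -> 0 < D ->
  exists eps eta : R, C < eta /\ eta < eps /\ eps - eta < D /\
    liminf_infty_eq (fun B => delta (sqrt (IZR b / IZR a)) B (1 / 2) (chi eps eta)) 0 /\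
    exists L : R, 0 < L /\
      limsup_infty_eq (fun B => delta (sqrt (IZR b / IZR a)) B (1 / 2) (chi eps eta)) L.
Proof.
  intros C D hC hD.
  set (th := sqrt (IZR b / IZR a)).
  assert (hth : 0 <= th) by apply sqrt_pos.
  pose proof (irrational a b ha hab hcop hsq) as Hirr. fold th in Hirr.
  set (eta := Rmax C ((th + 1) * (th + 1)) + 1).
  set (d := Rmin (D / 2) (1 / 20)).
  assert (hd : 0 < d /\ d <= D / 2 /\ d <= 1/20).
  { unfold d. split. apply Rmin_glb_lt; lra. split. apply Rmin_l. apply Rmin_r. }
  assert (heta : C < eta /\ (th+1)*(th+1) < eta /\ 1 <= eta).
  { unfold eta. pose proof (Rmax_l C ((th + 1) * (th + 1))). pose proof (Rmax_r C ((th + 1) * (th + 1))).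
    nra. }
  exists (eta + d), eta.
  split. lra. split. lra. split. lra.
  set (eps := eta + d).
  set (g := fun B => delta th B (1 / 2) (chi eps eta)).
  assert (Hg : forall B, g B = INR (cnt th eps eta B)) by (intros; apply g_eq).
  split.
  - split.
    + intros e he M.
      assert (hM : eps <= eta * (1 + 1 / INR (Z.to_nat (up (8 * eps))))).
      { assert (hM8 : (0 < up (8 * eps))%Z).
        { apply lt_IZR. destruct (archimed (8 * eps)). unfold eps in *. lra. }
        rewrite INR_IZR_INZ, Z2Nat.id by lia. destruct (archimed (8 * eps)).
        set (m := IZR (up (8 * eps))) in *.
        assert (1 < m) by (unfold eps in *; lra).
        replace (eta * (1 + 1/m)) with (eta + eta / m) by (field; lra).
        assert (d <= eta / m).
        { apply (Rmult_le_reg_r m). lra. replace (eta / m * m) with eta by (field; lra).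
          unfold eps in *. nra. }
        unfold eps; lra. }
      destruct (zero_exists th eps eta (Rmax M 1) (proj2 (proj2 heta)) ltac:(unfold eps; lra) hM)
        as [B [hB E]].
      { pose proof (Rmax_r M 1). lra. }
      exists B. split. pose proof (Rmax_l M 1). lra.
      fold g. rewrite Hg, E. simpl. lra.
    + intros e he. exists 0. intros B _. fold g. rewrite Hg. pose proof (pos_INR (cnt th eps eta B)). lra.
  - set (K0 := Z.to_nat (up (2 * eps))).
    set (P := fun n : nat => forall M, exists B, M <= B /\ INR n <= g B).
    assert (P1 : P 1%nat).
    { intros M. destruct (counted_exists th eps eta M hth ltac:(unfold eps; lra) ltac:(unfold eps; lra)
         ltac:(unfold eps; lra) Hirr) as [B [hB hc]].
      exists B. split; auto. rewrite Hg. apply le_INR; auto. }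
    assert (PK : ~ P (S K0)).
    { intros HP. destruct (HP 1) as [B [hB hc]]. rewrite Hg in hc.
      apply INR_le in hc. pose proof (cnt_bound th eps eta B ltac:(lra) ltac:(lra)). fold K0 in H. lia. }
    destruct (last_level P K0 P1 PK) as [n [hn [Pn Pn']]].
    exists (INR n). split. apply (lt_INR 0); lia.
    split.
    + intros e he M. destruct (Pn M) as [B [hB h]]. exists B. split; auto. fold g. lra.
    + intros e he. unfold P in Pn'. apply not_all_ex_not in Pn'. destruct Pn' as [M HM].
      exists M. intros B hB. fold g. rewrite Hg.
      assert (~ (INR (S n) <= g B)) by (intro; apply HM; exists B; auto).
      rewrite Hg in H. assert (cnt th eps eta B < S n)%nat.
      { apply INR_lt. lra. }
      assert (INR (cnt th eps eta B) <= INR n) by (apply le_INR; lia). lra.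
Qed.
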